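(* Let $\boldsymbol{\rho}=(\rho_{ij})_{i,j\in[d]}$ be a $d\times d$ correlation matrix, $d\ge 2$. Define a relation on $[d]$ by $$i \sim j \iff \max_{l\in[d],\, l\neq i,j} |\rho_{il}-\rho_{jl}| = 0 .$$ Then $\sim$ is an equivalence relation, and the partition $G^{\star}$ of $[d]$ into its equivalence classes is the unique coarsest partition $G$ of $[d]$ for which there exist a membership matrix $\mathbf{Z}$ associated with $G$, a $K\times K$ matrix $\boldsymbol{\Pi}$ ($K$ = number of blocks of $G$) and a $d\times d$ diagonal matrix $\boldsymbol{\Gamma}$ with $$\boldsymbol{\rho}=\mathbf{Z}\boldsymbol{\Pi}\mathbf{Z}^{\top}+\boldsymbol{\Gamma}.$$ That is, $G^{\star}$ itself admits such a decomposition, and every partition $G$ admitting such a decomposition is a refinement of $G^{\star}$.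
   Context: $[d]=\{1,\dots,d\}$. For a partition $G=\{G_1,\dots,G_K\}$ of $[d]$ with membership map $z:[d]\to[K]$ ($z(i)=k$ iff $i\in G_k$), the associated membership matrix is the $d\times K$ matrix $\mathbf{Z}=(\mathbf{1}_{\{z(i)=k\}})_{(i,k)\in[d]\times[K]}$. A partition $G$ is finer than (a refinement of) $G'$ if every block of $G$ is contained in a block of $G'$; ''coarsest'' refers to this partial order. *)

(* Defs.v *)
From HB Require Import structures.
From mathcomp Require Import all_boot all_order all_algebra.
Set Implicit Arguments. Unset Strict Implicit. Unset Printing Implicit Defensive.
Import Order.TTheory GRing.Theory Num.Theory.
Local Open Scope ring_scope.

Definition correlation_matrix (R : realFieldType) (d : nat) (rho : 'M[R]_d) : Prop :=
  [/\ rho^T = rho,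
      (forall i, rho i i = 1) &
      (forall v : 'cV[R]_d, 0 <= (v^T *m rho *m v) 0 0)].

Definition simb (R : realFieldType) (d : nat) (rho : 'M[R]_d) : rel 'I_d :=
  fun i j => \big[Num.max/0]_(l < d | (l != i) && (l != j)) `|rho i l - rho j l| == 0.

Definition memb_mx (R : realFieldType) (d K : nat) (z : 'I_d -> 'I_K) : 'M[R]_(d, K) :=
  \matrix_(i < d, k < K) (z i == k)%:R.

Definition blocks_of (d K : nat) (z : 'I_d -> 'I_K) : {set {set 'I_d}} :=
  [set [set i | z i == k] | k : 'I_K].

(* Since a
   partition has no empty block, blocks_of z = G forces z to be onto [K]. *)
Definition admits_decomp (R : realFieldType) (d : nat) (rho : 'M[R]_d)
    (G : {set {set 'I_d}}) : Prop :=
  exists K (z : 'I_d -> 'I_K) (Pi : 'M[R]_K) (Gamma : 'M[R]_d),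
    [/\ blocks_of z = G, is_diag_mx Gamma &
        rho = memb_mx R z *m Pi *m (memb_mx R z)^T + Gamma].

Definition finer (d : nat) (G G' : {set {set 'I_d}}) : Prop :=
  forall B, B \in G -> exists2 C, C \in G' & B \subset C.

(* Main.v *)
Require Import Defs.
From HB Require Import structures.
From mathcomp Require Import all_boot all_order all_algebra.
Import Order.TTheory GRing.Theory Num.Theory.
Local Open Scope ring_scope.

Section H.
Variables (R : realFieldType) (d : nat) (rho : 'M[R]_d).

Lemma simbP i j : simb rho i j <-> (forall l, l != i -> l != j -> rho i l = rho j l).
Proof.
rewrite /simb; split.
- move=> /eqP H l li lj.
  have: `|rho i l - rho j l| <= 0.
    rewrite -H.
    elim: (index_enum _) (mem_index_enum l) => [//|x s IH] /=.
    rewrite big_cons inE; case/orP => [/eqP <-|ls].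
      by rewrite li lj /= le_max lexx.
    case: ifP => _; last exact: IH.
    by rewrite le_max (IH ls) orbT.
  rewrite normr_le0 subr_eq0 => /eqP //.
- move=> H; apply/eqP; apply: (big_ind (fun x => x = 0)) => //.
    by move=> x y -> ->; rewrite maxxx.
  by move=> l /andP[li lj]; rewrite H // subrr normr0.
Qed.

Lemma simb_refl i : simb rho i i.
Proof. by apply/simbP. Qed.

Lemma simb_sym {i j} : simb rho i j -> simb rho j i.
Proof. by move/simbP=> H; apply/simbP=> l l1 l2; rewrite H. Qed.

Hypothesis sym : rho^T = rho.

Lemma rsym i j : rho i j = rho j i.
Proof. by rewrite -[in LHS]sym mxE. Qed.

Lemma simb_trans {x y z} : simb rho x y -> simb rho y z -> simb rho x z.
Proof.
move=> /simbP Hxy /simbP Hyz; apply/simbP => l lx lz.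
have [ly|ly] := eqVneq l y; last by rewrite Hxy // Hyz.
subst l.
have [exz|nxz] := eqVneq x z; first by subst.
have xy : x != y by rewrite eq_sym.
have zy : z != y by rewrite eq_sym.
have zx : z != x by rewrite eq_sym.
by rewrite (rsym x y) (Hyz x) // (rsym z x) (Hxy z) // rsym.
Qed.

Lemma simb_equiv : equivalence_rel (simb rho).
Proof.
move=> x y z; split; first exact: simb_refl.
move=> xy; case Hxz: (simb rho x z); case Hyz: (simb rho y z) => //.
- by rewrite (simb_trans (simb_sym xy) Hxz) in Hyz.
- by rewrite (simb_trans xy Hyz) in Hxz.
Qed.

Lemma claimC i j i' j' : simb rho i i' -> simb rho j j' -> i != j -> i' != j' ->
  rho i j = rho i' j'.
Proof.
move=> ii' jj' nij ni'j'.
move/simbP: (jj') => H1; move/simbP: (ii') => H2.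
have nji : j != i by rewrite eq_sym.
have nj'i' : j' != i' by rewrite eq_sym.
have [ei|nei] := eqVneq i i'.
  subst i'. by rewrite (rsym i j) (H1 i) // rsym.
have ni'i : i' != i by rewrite eq_sym.
have [eji'|neji'] := eqVneq j i'.
  subst j.
  have [ej'i|nej'i] := eqVneq j' i; first by subst; rewrite rsym.
  have nij' : i != j' by rewrite eq_sym.
  by rewrite (rsym i i') (H1 i) // rsym (H2 j').
have ni'j : i' != j by rewrite eq_sym.
by rewrite (H2 j) // (rsym i' j) (H1 i') // rsym.
Qed.
End H.

Lemma memb_prod (R : realFieldType) d K (z : 'I_d -> 'I_K) (A : 'M[R]_K) i j :
  (memb_mx R z *m A *m (memb_mx R z)^T) i j = A (z i) (z j).
Proof.
rewrite mxE (bigD1 (z j)) //= big1 => [|k nk]; last by rewrite !mxE eq_sym (negbTE nk) mulr0.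
rewrite addr0 !mxE eqxx mulr1 (bigD1 (z i)) //= big1 => [|k nk]; last by rewrite !mxE eq_sym (negbTE nk) mul0r.
by rewrite addr0 !mxE eqxx mul1r.
Qed.

Theorem theorem1 (R : realFieldType) (d : nat) (rho : 'M[R]_d) :
  (2 <= d)%N -> correlation_matrix rho ->
  equivalence_rel (simb rho) /\
  (let Gstar := equivalence_partition (simb rho) [set: 'I_d] in
   partition Gstar [set: 'I_d] /\
   admits_decomp rho Gstar /\
   (forall G : {set {set 'I_d}}, partition G [set: 'I_d] ->
      admits_decomp rho G -> finer G Gstar)).
Proof.
move=> d2 [sym _ _].
have E := @simb_equiv R d rho sym.
set P := equivalence_partition _ _.
have PP : partition P [set: 'I_d].
  by apply: equivalence_partitionP => x y z _ _ _; exact: E.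
have pbP : forall x y, (y \in pblock P x) = simb rho x y.
  by move=> x y; apply: pblock_equivalence_partition => //; move=> ? ? ? _ _ _; exact: E.
case/and3P: (PP) => /eqP covP trP n0P.
have inC : forall x, x \in cover P by move=> x; rewrite covP inE.
split => //; move=> Gstar; split => //; split.
- have i0 : 'I_d by exists 0%N; apply: leq_trans d2.
  have P0 : pblock P i0 \in P by apply: pblock_mem.
  pose z i := enum_rank_in P0 (pblock P i).
  have zeq : forall x y, (z x == z y) = simb rho x y.
    move=> x y; rewrite -pbP -eq_pblock //; apply/eqP/eqP => [|E1]; last by rewrite /z E1.
    by move/enum_rank_in_inj; apply; apply: pblock_mem.
  have zblk : forall x, [set i | z i == z x] = pblock P x.
    by move=> x; apply/setP => y; rewrite !inE pbP eq_sym zeq.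
  have nonempty : forall B, B \in P -> exists x, x \in B.
    move=> B BP; have : B != set0 by apply: contraNneq n0P => <-.
    by case/set0Pn => x; exists x.
  pose Pi := \matrix_(k, k') match [pick p : 'I_d * 'I_d | (z p.1 == k) && (z p.2 == k') && (p.1 != p.2)] with Some p => rho p.1 p.2 | None => 0 end.
  pose Ga := \matrix_(i, j) if i == j then rho i i - Pi (z i) (z i) else 0.
  exists _, z, Pi, Ga; split.
  + apply/setP => B; apply/imsetP/idP.
    * case=> k _ ->.
      have [x xk] := nonempty _ (enum_valP k).
      have zx : z x = k.
        by rewrite /z (def_pblock trP (enum_valP k) xk) enum_valK_in.
      by rewrite -zx zblk pblock_mem.
    * move=> BP; have [x xB] := nonempty _ BP.
      by exists (z x) => //; rewrite zblk (def_pblock trP BP xB).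
  + apply/is_diag_mxP => i j nij; rewrite mxE; case: eqP => // eij.
    by move: nij; rewrite eij eqxx.
  + apply/matrixP => i j; rewrite mxE memb_prod !mxE.
    have [<-|nij] := eqVneq i j; first by rewrite addrC subrK.
    rewrite addr0; case: pickP => [[a b] /= /andP[/andP[za zb] nab]|/(_ (i, j))]; last by rewrite /= !eqxx nij.
    apply: (@claimC R d rho sym) => //; rewrite -zeq eq_sym //.
- move=> G GP [K [z [Pi [Ga [bz dg erho]]]]] B BG.
  case/and3P: GP => _ _ n0G.
  have : B != set0 by apply: contraNneq n0G => <-.
  case/set0Pn => x xB.
  exists (pblock P x); first exact: pblock_mem.
  move: BG; rewrite -bz => /imsetP[k _ Bk]; subst B.
  move: xB; rewrite inE => /eqP zx.
  apply/subsetP => y; rewrite inE => /eqP zy; rewrite pbP; apply/simbP => l lx ly.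
  have off : forall a b, a != b -> rho a b = Pi (z a) (z b).
    move=> a b nab; rewrite erho mxE memb_prod (is_diag_mxP dg) ?addr0 //.
  by rewrite !off 1?eq_sym // zx zy.
Qed.
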